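(* Let $G=(V,E)$ be a connected graph and $1\le k\le |V|$. Let $D\subseteq V$ be such that every $v\in D$ is dominated by some $u\in V\setminus D$, and $|V\setminus D|\ge k$. Let $S\subseteq V\setminus D$ with $|S|=k$ be a local optimum with respect to swaps restricted to $V\setminus D$, i.e. for all $s\in S$ and all $o\in (V\setminus D)\setminus S$ we have $f((S\setminus\{s\})\cup\{o\})\ge f(S)$. Then $$f(S)\le 5\cdot \min\{f(T): T\subseteq V,\ |T|=k\},$$ equivalently $c(S)\ge \tfrac15\max\{c(T):T\subseteq V,\ |T|=k\}$.
   Context: Graphs are finite, undirected, unweighted, without self-loops, connected. $\mathrm{dist}$ is the shortest-path distance, $\mathrm{dist}(u,S)=\min_{s\in S}\mathrm{dist}(u,s)$, group farness $f(S)=\sum_{u\in V}\mathrm{dist}(u,S)$, and group closeness $c(S)=(|V|-|S|)/f(S)$. $N[v]$ is the closed neighborhood of $v$, and $u$ dominates $v$ if $N[v]\subseteq N[u]$. *)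

(* Defs.v *)
From mathcomp Require Import all_boot all_order.
Set Implicit Arguments. Unset Strict Implicit. Unset Printing Implicit Defensive.

Section Graph.
Variable T : finType.
Variable e : rel T.

Definition simple_graph := symmetric e /\ irreflexive e.
Definition connected_graph := forall u v : T, connect e u v.

Definition closed_nbhd (v : T) : {set T} := [set w | (w == v) || e v w].
Definition dominates (u v : T) : bool := closed_nbhd v \subset closed_nbhd u.

Fixpoint ball (n : nat) (u : T) : {set T} :=
  match n with
  | 0 => [set u]
  | n'.+1 => \bigcup_(w in ball n' u) closed_nbhd w
  end.

(* shortest-path distance: least n with v in ball n u (distances in a
   connected graph are < #|T|; returns #|T| if v is unreachable) *)
Definition dist (u v : T) : nat := find (fun n => v \in ball n u) (iota 0 #|T|).

(* dist(u,S) = min_{s in S} dist(u,s) (S assumed nonempty where used) *)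
Definition dist_set (u : T) (S : {set T}) : nat := \big[minn/#|T|]_(s in S) dist u s.

Definition farness (S : {set T}) : nat := \sum_(u : T) dist_set u S.

End Graph.

(* Main.v *)
Require Import Defs.
From mathcomp Require Import all_boot all_order zify.
Set Implicit Arguments. Unset Strict Implicit. Unset Printing Implicit Defensive.

Lemma sum_sel (I : finType) (A : {set I}) (i0 : I) (x : nat) :
  i0 \in A -> \sum_(o in A) (if i0 == o then x else 0) = x.
Proof.
move=> H; rewrite (bigD1 i0) //= eqxx big1 ?addn0 // => o /andP[_ Ho].
by rewrite eq_sym (negbTE Ho).
Qed.

Lemma sum_fiber_eq (I J : finType) (A : {set I}) (B : {set J}) (p : I -> J) (h : J -> nat) :
  (forall i, i \in A -> p i \in B) ->
  \sum_(i in A) h (p i) = \sum_(j in B) #|[set i in A | p i == j]| * h j.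
Proof.
move=> HAB; rewrite (partition_big p (mem B)) //=.
apply: eq_bigr => j Hj.
rewrite (eq_bigr (fun _ => h j)); last by move=> i /andP[_ /eqP ->].
rewrite sum_nat_const; congr (_ * _); apply: eq_card => i; by rewrite !inE.
Qed.

Lemma inj_exists (I J : finType) (A : {set I}) (B : {set J}) (b0 : J) :
  #|A| <= #|B| -> exists f : I -> J, {in A &, injective f} /\ {in A, forall x, f x \in B}.
Proof.
move=> H.
have Hs : forall x, x \in A -> index x (enum A) < size (enum B).
  move=> x Hx; rewrite -cardE; apply: leq_trans H; by rewrite cardE index_mem mem_enum.
exists (fun x => nth b0 (enum B) (index x (enum A))); split.
  move=> x y Hx Hy /eqP; rewrite nth_uniq ?enum_uniq ?Hs //.
  move/eqP; apply: (index_inj x); by rewrite mem_enum.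
move=> x Hx; rewrite -mem_enum; exact: mem_nth (Hs _ Hx).
Qed.

Section Dist.
Variable T : finType.
Variable e : rel T.
Hypothesis esym : symmetric e.

Local Notation N := #|T|.
Local Notation d := (dist e).
Local Notation ds := (dist_set e).

Lemma nbhd_sym u v : (v \in closed_nbhd e u) = (u \in closed_nbhd e v).
Proof. by rewrite !inE eq_sym esym. Qed.

Lemma nbhd_self u : u \in closed_nbhd e u.
Proof. by rewrite !inE eqxx. Qed.

Lemma ballS n u v : (v \in ball e n.+1 u) = [exists w, (w \in ball e n u) && (v \in closed_nbhd e w)].
Proof.
apply/bigcupP/existsP => [[w Hw Hv]|[w /andP[Hw Hv]]]; exists w => //; exact/andP.
Qed.

Lemma ball0 u v : (v \in ball e 0 u) = (v == u).
Proof. by rewrite /= inE. Qed.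

Lemma ball_trans a b u v w : v \in ball e a u -> w \in ball e b v -> w \in ball e (a + b) u.
Proof.
move=> Hv; elim: b w => [|b IH] w.
  by rewrite ball0 addn0 => /eqP ->.
rewrite ballS addnS ballS => /existsP[w' /andP[Hw' Hw]].
apply/existsP; exists w'; rewrite Hw andbT; exact: IH.
Qed.

Lemma ball1 u v : (v \in ball e 1 u) = (v \in closed_nbhd e u).
Proof.
rewrite ballS; apply/existsP/idP => [[w /andP[]]|H]; first by rewrite ball0 => /eqP ->.
by exists u; rewrite ball0 eqxx.
Qed.

Lemma ball_sym n u v : v \in ball e n u -> u \in ball e n v.
Proof.
elim: n u v => [|n IH] u v; first by rewrite !ball0 eq_sym.
rewrite ballS => /existsP[w /andP[Hw Hv]].
have H1 : w \in ball e 1 v by rewrite ball1 -nbhd_sym.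
have := ball_trans H1 (IH _ _ Hw); by rewrite add1n.
Qed.

Lemma dist_le n u v : v \in ball e n u -> d u v <= n.
Proof.
move=> H; rewrite /dist.
case: (ltnP n N) => Hn.
  rewrite leqNgt; apply/negP => Hf.
  have := before_find 0 Hf; rewrite nth_iota // add0n H //.
apply: leq_trans (find_size _ _) _; by rewrite size_iota.
Qed.

Lemma dist_leN u v : d u v <= N.
Proof. by rewrite /dist; apply: leq_trans (find_size _ _) _; rewrite size_iota. Qed.

Lemma dist_ball u v : d u v < N -> v \in ball e (d u v) u.
Proof.
rewrite /dist => H.
have Hh : has (fun n => v \in ball e n u) (iota 0 N) by rewrite has_find size_iota.
have := nth_find 0 Hh; rewrite nth_iota //; by rewrite add0n.
Qed.

Lemma dist_uu u : d u u = 0.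
Proof. apply/eqP; rewrite -leqn0; apply: dist_le; by rewrite ball0. Qed.

Lemma dist_tri u v w : d u w <= d u v + d v w.
Proof.
case: (ltnP (d u v) N) => H1; last by apply: leq_trans (dist_leN _ _) (leq_trans H1 (leq_addr _ _)).
case: (ltnP (d v w) N) => H2; last by apply: leq_trans (dist_leN _ _) (leq_trans H2 (leq_addl _ _)).
apply: dist_le; exact: ball_trans (dist_ball H1) (dist_ball H2).
Qed.

Lemma dist_sym_le u v : d v u <= d u v.
Proof.
case: (ltnP (d u v) N) => H; last by apply: leq_trans (dist_leN _ _) H.
apply: dist_le; apply: ball_sym; exact: dist_ball.
Qed.

Lemma dist_sym u v : d u v = d v u.
Proof. by apply/eqP; rewrite eqn_leq !dist_sym_le. Qed.

Lemma dist0 u v : d u v = 0 -> u = v.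
Proof.
move=> H.
have HN : 0 < N by apply/card_gt0P; exists u.
have HN' : d u v < N by rewrite H.
have := dist_ball HN'; rewrite H ball0 => /eqP ->.
done.
Qed.

Lemma dist_dom u v x : dominates e u v -> x != v -> d x u <= d x v.
Proof.
move=> Hdom Hx.
case: (ltnP (d x v) N) => H; last by apply: leq_trans (dist_leN _ _) H.
have Hb := dist_ball H.
move: Hb; case En: (d x v) => [|n].
  by rewrite ball0 eq_sym (negbTE Hx).
rewrite ballS => /existsP[w /andP[Hw Hv]] .
apply: dist_le; rewrite ballS; apply/existsP; exists w; rewrite Hw /=.
rewrite nbhd_sym; apply: (subsetP Hdom); by rewrite -nbhd_sym.
Qed.

Lemma dist_adj u v : v \in closed_nbhd e u -> d v u <= 1.
Proof. move=> H; apply: dist_le; by rewrite ball1 -nbhd_sym. Qed.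

Lemma bigminn_le (I : eqType) (r : seq I) (P : pred I) (F : I -> nat) n x :
  x \in r -> P x -> \big[minn/n]_(i <- r | P i) F i <= F x.
Proof.
elim: r => [|a r IH] //; rewrite inE big_cons => /orP[/eqP <-|Hr] Hx.
  by rewrite Hx geq_minl.
case: (P a); last exact: IH.
by apply: leq_trans (geq_minr _ _) (IH Hr Hx).
Qed.

Lemma ds_le u (S : {set T}) s : s \in S -> ds u S <= d u s.
Proof.
move=> Hs; rewrite /dist_set; apply: bigminn_le => //; exact: mem_index_enum.
Qed.

Lemma ds_bound u (S : {set T}) : ds u S <= N.
Proof.
rewrite /dist_set; apply: (big_ind (fun x => x <= N)) => //.
  by move=> x y Hx Hy; rewrite geq_min Hx.
move=> s _; exact: dist_leN.
Qed.

Lemma ds_lb u (S : {set T}) n : n <= N -> (forall s, s \in S -> n <= d u s) -> n <= ds u S.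
Proof.
move=> HN H; rewrite /dist_set; apply: (big_ind (fun x => n <= x)) => //.
by move=> x y Hx Hy; rewrite leq_min Hx.
Qed.

Lemma ds_attain u (S : {set T}) s : s \in S -> (forall t, t \in S -> d u s <= d u t) -> ds u S = d u s.
Proof.
move=> Hs H; apply/eqP; rewrite eqn_leq ds_le //=; apply: ds_lb => //; exact: dist_leN.
Qed.

Lemma ds_anti u (S S' : {set T}) : S \subset S' -> ds u S' <= ds u S.
Proof.
move=> HS; apply: ds_lb; first exact: ds_bound.
move=> s Hs; apply: ds_le; exact: (subsetP HS).
Qed.

Lemma ds_mem u (S : {set T}) : u \in S -> ds u S = 0.
Proof. move=> H; apply/eqP; rewrite -leqn0; apply: leq_trans (ds_le _ H) _; by rewrite dist_uu. Qed.

Lemma ds_pos u (S : {set T}) : u \notin S -> 0 < ds u S.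
Proof.
move=> H; apply: ds_lb.
  by apply/card_gt0P; exists u.
move=> s Hs; rewrite lt0n; apply/eqP => /dist0 E; by rewrite E Hs in H.
Qed.

Lemma far_anti (S S' : {set T}) : S \subset S' -> farness e S' <= farness e S.
Proof. move=> H; apply: leq_sum => u _; exact: ds_anti. Qed.


Lemma swap_far (Ts : {set T}) v w u :
  v \in Ts -> w \notin Ts -> v != w -> u \in w |: (Ts :\ v) ->
  dominates e u v -> u != v -> farness e (w |: (Ts :\ v)) <= farness e Ts.
Proof.
move=> Hv Hw Hvw Hu Hdom Huv.
set T' := w |: (Ts :\ v).
have HwT : w \in T' by rewrite setU11.
rewrite /farness (bigD1 v) //= [X in _ <= X](bigD1 v) //=.
have Hwv : w != v by rewrite eq_sym.
rewrite !(bigD1 w Hwv) /=.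
have H1 : ds v T' <= 1.
  have Hvu : v \in closed_nbhd e u by apply: (subsetP Hdom); exact: nbhd_self.
  apply: leq_trans (ds_le _ Hu) _; exact: dist_adj.
have H2 := ds_mem HwT.
have H3 := ds_pos Hw.
have H4 : \sum_(i | (i != v) && (i != w)) ds i T' <= \sum_(i | (i != v) && (i != w)) ds i Ts.
  apply: leq_sum => x /andP[Hxv Hxw].
  apply: ds_lb; first exact: ds_bound.
  move=> t Ht; case: (eqVneq t v) => [->|Htv].
    apply: leq_trans (ds_le _ Hu) _; exact: dist_dom.
  by apply: ds_le; rewrite /T' setU1r // !inE Htv.
rewrite H2; lia.
Qed.

Lemma replace (D : {set T}) k :
  (forall v, v \in D -> exists2 u, u \in ~: D & dominates e u v) ->
  k <= #|~: D| ->
  forall n (Ts : {set T}), #|Ts :&: D| = n -> #|Ts| = k ->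
  exists2 Ts' : {set T}, Ts' \subset ~: D & (#|Ts'| = k /\ farness e Ts' <= farness e Ts).
Proof.
move=> Hdom Hk n; elim: n => [|n IH] Ts Hn HT.
  exists Ts => //; apply/subsetP => x Hx; rewrite inE; apply/negP => HxD.
  have : x \in Ts :&: D by rewrite inE Hx HxD.
  by rewrite (cards0_eq Hn) inE.
have [v HvTD] : exists v, v \in Ts :&: D by apply/card_gt0P; rewrite Hn.
move: HvTD; rewrite inE => /andP[HvT HvD].
have [u HuD Hdu] := Hdom v HvD.
have Huv : u != v by apply/eqP => E; move: HuD; rewrite inE E HvD.
have [w [HwT HwD Hu]] : exists w, [/\ w \notin Ts, w \in ~: D & u \in w |: (Ts :\ v)].
  case HuT: (u \in Ts).
    have [w Hw] : exists w, w \in ~: D :\: Ts.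
      apply/card_gt0P; rewrite lt0n; apply/eqP => /cards0_eq E.
      have Hsub : ~: D \subset Ts :\ v.
        apply/subsetP => x Hx; rewrite !inE.
        have : x \notin ~: D :\: Ts by rewrite E inE.
        rewrite !inE; move: Hx; rewrite inE => Hx; rewrite Hx /= andbT negbK => ->.
        by rewrite andbT; apply/eqP => Exv; move: Hx; rewrite Exv HvD.
      have := subset_leq_card Hsub.
      have := cardsD1 v Ts; rewrite HvT HT; lia.
    move: Hw; rewrite inE => /andP[HwT HwD].
    exists w; split => //; apply: setU1r; by rewrite !inE Huv HuT.
  by exists u; rewrite HuT setU11.
have Hvw : v != w by apply/eqP => E; move: HwD; rewrite inE -E HvD.
have HnD : #|(w |: (Ts :\ v)) :&: D| = n.
  have -> : (w |: (Ts :\ v)) :&: D = (Ts :&: D) :\ v.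
    apply/setP => x; rewrite !inE; case: (eqVneq x w) => [->|] /=.
      move: HwD; rewrite inE => /negbTE ->; by rewrite !andbF.
    by rewrite andbA.
  have := cardsD1 v (Ts :&: D); rewrite inE HvT HvD Hn; lia.
have HcT : #|w |: (Ts :\ v)| = k.
  rewrite cardsU1 inE negb_and HwT orbT /=.
  have := cardsD1 v Ts; rewrite HvT HT; lia.
have [Ts' Hsub [Hcard Hf]] := IH _ HnD HcT.
exists Ts' => //; split => //.
apply: leq_trans Hf _; exact: swap_far Huv.
Qed.

Lemma kmed (F S O : {set T}) k : 0 < k -> #|S| = k -> #|O| = k -> O \subset F ->
  (forall s o, s \in S -> o \in F -> farness e S <= farness e (o |: (S :\ s))) ->
  farness e S <= 5 * farness e O.
Proof.
move=> Hk HS HO HOF Hloc.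
have [s0 Hs0] : exists s0, s0 \in S by apply/card_gt0P; rewrite HS.
have [o0 Ho0] : exists o0, o0 \in O by apply/card_gt0P; rewrite HO.
pose sig j := [arg min_(s < s0 in S) d j s].
pose sigs j := [arg min_(o < o0 in O) d j o].
have sigP j : [/\ sig j \in S, ds j S = d j (sig j) & forall t, t \in S -> d j (sig j) <= d j t].
  rewrite /sig; case: arg_minnP => // s Hs Hmin; split => //; exact: ds_attain.
have sigsP j : [/\ sigs j \in O, ds j O = d j (sigs j) & forall t, t \in O -> d j (sigs j) <= d j t].
  rewrite /sigs; case: arg_minnP => // s Hs Hmin; split => //; exact: ds_attain.
clearbody sig sigs.
have Hswap : forall s o, s \in S -> o \in O -> (forall o', o' \in O -> sig o' = s -> o' = o) ->
  \sum_j (if sigs j == o then ds j S else 0) <=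
  \sum_j (if sigs j == o then ds j O else 0) + \sum_j (if sig j == s then 2 * ds j O else 0).
  move=> s o Hs Ho Hu.
  set S' := o |: (S :\ s).
  have Hb : forall j, ds j S' <= (if sigs j == o then ds j O else ds j S) + (if sig j == s then 2 * ds j O else 0).
    move=> j; have [HjS EjS MjS] := sigP j; have [HjO EjO MjO] := sigsP j.
    case: (eqVneq (sigs j) o) => [Ej|Nj].
      apply: leq_trans (leq_addr _ _); rewrite EjO Ej; apply: ds_le; exact: setU11.
    case: (eqVneq (sig j) s) => [Es|Ns].
      set o' := sigs j in Nj EjO HjO *.
      have [Ho'S _ Mo'] := sigP o'.
      have Hts : sig o' != s by apply/eqP => /(Hu _ HjO) E; rewrite E eqxx in Nj.
      have HtS' : sig o' \in S' by rewrite setU1r // !inE Hts Ho'S.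
      apply: leq_trans (ds_le _ HtS') _.
      have T1 := dist_tri j o' (sig o').
      have T2 := Mo' s Hs.
      have T3 := dist_tri o' j s.
      rewrite (dist_sym o' j) in T3.
      rewrite Es in EjS; rewrite EjO EjS; lia.
    rewrite addn0; apply: leq_trans (ds_le _ _) _; last by rewrite EjS.
    by rewrite setU1r // !inE Ns HjS.
  have E1 : farness e S = \sum_j (if sigs j == o then ds j S else 0) + \sum_j (if sigs j == o then 0 else ds j S).
    rewrite /farness -big_split; apply: eq_bigr => j _ /=.
    by case: (sigs j == o); rewrite ?addn0.
  have E2 : \sum_j ((if sigs j == o then ds j O else ds j S) + (if sig j == s then 2 * ds j O else 0)) =
     \sum_j (if sigs j == o then ds j O else 0) + \sum_j (if sigs j == o then 0 else ds j S) + \sum_j (if sig j == s then 2 * ds j O else 0).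
    rewrite -!big_split; apply: eq_bigr => j _ /=; by case: (sigs j == o); rewrite ?addn0 ?add0n.
  have H1 : farness e S <= farness e S' := Hloc s o Hs (subsetP HOF o Ho).
  have H2 : farness e S' <= \sum_j ((if sigs j == o then ds j O else ds j S) + (if sig j == s then 2 * ds j O else 0)).
    by apply: leq_sum => j _; exact: Hb.
  rewrite E2 in H2; rewrite E1 in H1; lia.
pose m s := #|[set o in O | sig o == s]|.
have mE : forall s, m s = #|[set o in O | sig o == s]| by [].
clearbody m.
pose X := [set o in O | m (sig o) != 1].
have inX : forall o, (o \in X) = (o \in O) && (m (sig o) != 1) by move=> o; rewrite inE.
pose F0 := [set s in S | m s == 0].
have inF0 : forall s, (s \in F0) = (s \in S) && (m s == 0) by move=> s; rewrite inE.
have cX : #|X| = \sum_(i in O) (m (sig i) != 1 : nat).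
  rewrite -sum1_card big_mkcond [RHS]big_mkcond /=; apply: eq_bigr => i _.
  by rewrite inX; case: (i \in O); case: (m (sig i) != 1).
have cF0 : #|F0| = \sum_(s in S) (m s == 0 : nat).
  rewrite -sum1_card big_mkcond [RHS]big_mkcond /=; apply: eq_bigr => i _.
  by rewrite inF0; case: (i \in S); case: (m i == 0).
clearbody X F0.
have sigS : forall i, i \in O -> sig i \in S by move=> i _; case: (sigP i).
have cO : #|O| = \sum_(s in S) m s * 1.
  rewrite -sum1_card (sum_fiber_eq (fun _ => 1) sigS); apply: eq_bigr => s _; by rewrite mE.
rewrite (sum_fiber_eq (fun s => (m s != 1 : nat)) sigS) in cX.
have cS : #|S| = \sum_(s in S) 1 by rewrite sum1_card.
have HX : #|X| <= #|setX F0 [set: bool]|.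
  rewrite cardsX cardsT card_bool.
  have Hle : \sum_(s in S) m s * (m s != 1) + 2 * \sum_(s in S) 1 <= 2 * \sum_(s in S) (m s == 0 : nat) + 2 * \sum_(s in S) m s * 1.
    rewrite !big_distrr -!big_split; apply: leq_sum => s _; case: (m s) => [|[|n]] /=; lia.
  have E : \sum_(j in S) #|[set i in O | sig i == j]| * (m j != 1) = \sum_(s in S) m s * (m s != 1).
    by apply: eq_bigr => s _; rewrite mE.
  rewrite E in cX; lia.
have [f [finj fB]] := inj_exists (s0, true) HX.
pose pi o := if o \in X then (f o).1 else sig o.
have piX : forall o, o \in X -> (pi o \in S) /\ m (pi o) = 0.
  move=> o HoX; rewrite /pi HoX; have := fB o HoX; rewrite !inE inF0 => /andP[/andP[H1 /eqP H2] _]; by [].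
have piS : forall o, o \in O -> pi o \in S.
  move=> o Ho; case HoX: (o \in X); first by case: (piX o HoX).
  by rewrite /pi HoX; apply: sigS.
have piU : forall o o', o \in O -> o' \in O -> sig o' = pi o -> o' = o.
  move=> o o' Ho Ho' E; case HoX: (o \in X).
    have [_ Hm] := piX o HoX; rewrite -E mE in Hm; move/cards0_eq: Hm => Hm.
    have : o' \in [set x in O | sig x == sig o'] by rewrite inE Ho' eqxx.
    by rewrite Hm inE.
  rewrite /pi HoX in E.
  have : m (sig o) == 1 by move: HoX; rewrite inX Ho /= => /negbT; rewrite negbK.
  rewrite mE => /cards1P [x Hx].
  have H1 : o \in [set y in O | sig y == sig o] by rewrite inE Ho eqxx.
  have H2 : o' \in [set y in O | sig y == sig o] by rewrite inE Ho' E eqxx.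
  rewrite Hx !inE in H1 H2; by rewrite (eqP H1) (eqP H2).
have piC : forall s, #|[set o in O | pi o == s]| <= 2.
  move=> s; set Fs := [set o in O | pi o == s].
  have inFs : forall o, (o \in Fs) = (o \in O) && (pi o == s) by move=> o; rewrite inE.
  rewrite -(cardsID X Fs).
  case: (set_0Vmem (Fs :&: X)) => [E0|[o1 Ho1]].
    rewrite E0 cards0 add0n.
    apply: leq_trans (_ : 1 <= 2) => //.
    apply/card_le1P => x1 H1 x2.
    move: H1; rewrite in_setD inFs => /andP[Hx1X /andP[Hx1 /eqP E1]].
    rewrite in_setD inFs; apply/idP/idP => [/andP[Hx2X /andP[Hx2 /eqP E2]]|/eqP ->].
      apply/eqP; apply: piU Hx1 Hx2 _; rewrite /pi (negbTE Hx2X) (negbTE Hx1X) in E1 E2 *.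
      by rewrite E1 E2.
    by rewrite Hx1X Hx1 E1 eqxx.
  move: Ho1; rewrite in_setI inFs => /andP[/andP[Ho1 /eqP Es] Ho1X].
  have [_ Hm0] := piX o1 Ho1X; rewrite Es in Hm0.
  have -> : Fs :\: X = set0.
    apply/setP => x; rewrite in_setD inFs in_set0; apply/negP => /andP[HxX /andP[Hx /eqP Ex]].
    rewrite /pi (negbTE HxX) in Ex.
    move: Hm0; rewrite mE => /cards0_eq Hm.
    have : x \in [set y in O | sig y == s] by rewrite inE Hx Ex eqxx.
    by rewrite Hm inE.
  rewrite cards0 addn0.
  have Himg : [set f x | x in Fs :&: X] \subset [set (s, true); (s, false)].
    apply/subsetP => y /imsetP[o Ho ->].
    move: Ho; rewrite in_setI inFs => /andP[/andP[_ /eqP Eo] HoX].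
    rewrite /pi HoX in Eo; move: Eo; case: (f o) => a b /= ->.
    by case: b; rewrite !inE eqxx ?orbT.
  have := subset_leq_card Himg; rewrite card_in_imset.
    by rewrite cards2 => H; apply: leq_trans H _; rewrite ltnS leq_b1.
  by move=> x y /setIP[_ Hx] /setIP[_ Hy]; apply: finj.
pose g s := \sum_j (if sig j == s then 2 * ds j O else 0).
have EfS : farness e S = \sum_(o in O) \sum_j (if sigs j == o then ds j S else 0).
  rewrite exchange_big /farness /=; apply: eq_bigr => j _; rewrite sum_sel //; by case: (sigsP j).
have EfO : farness e O = \sum_(o in O) \sum_j (if sigs j == o then ds j O else 0).
  rewrite exchange_big /farness /=; apply: eq_bigr => j _; rewrite sum_sel //; by case: (sigsP j).
have Hg : \sum_(o in O) g (pi o) <= 2 * \sum_(s in S) g s.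
  rewrite (sum_fiber_eq g piS) big_distrr; apply: leq_sum => s _.
  exact: leq_mul (piC s) (leqnn _).
have Hgs : \sum_(s in S) g s = 2 * farness e O.
  rewrite /g exchange_big /farness big_distrr /=; apply: eq_bigr => j _; rewrite sum_sel //.
  by case: (sigP j).
have Hsum : farness e S <= farness e O + \sum_(o in O) g (pi o).
  rewrite EfS EfO -big_split; apply: leq_sum => o Ho.
  apply: (Hswap (pi o) o (piS o Ho) Ho) => o' Ho' E; exact: piU Ho Ho' E.
lia.
Qed.

End Dist.

Theorem mainTheorem3 (T : finType) (e : rel T) (k : nat) (D S : {set T}) :
  simple_graph e -> connected_graph e ->
  1 <= k <= #|T| ->
  (forall v, v \in D -> exists2 u, u \in ~: D & dominates e u v) ->
  k <= #|~: D| ->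
  S \subset ~: D -> #|S| = k ->
  (forall s o, s \in S -> o \in ~: D -> o \notin S ->
     farness e S <= farness e (o |: (S :\ s))) ->
  forall Tset : {set T}, #|Tset| = k -> farness e S <= 5 * farness e Tset.
Proof.
move=> [esym _] _ /andP[Hk _] Hdom HkD HSD HS Hloc Tset HT.
have [Ts' Hsub [Hc Hf]] := replace esym Hdom HkD (erefl _) HT.
apply: leq_trans (_ : 5 * farness e Ts' <= _); last by rewrite leq_mul2l Hf orbT.
apply: (kmed esym Hk HS Hc Hsub) => s o Hs Ho.
case HoS: (o \in S); last by apply: Hloc => //; rewrite HoS.
apply: far_anti; apply/subsetP => x; rewrite !inE => /orP[/eqP ->|/andP[_ ->]] //.
Qed.
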